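(* If $H$ is a breakable monoid, then $\mathcal{P}_{\mathrm{fin},1}(H)$ is UmF.
   Context: A monoid $H$ is breakable if $xy\in\{x,y\}$ for all $x,y\in H$. $\mathcal{P}_{\mathrm{fin},1}(H)$ denotes the set of non-empty finite subsets of $H$ containing $1_H$, a monoid under $XY=\{xy:x\in X,y\in Y\}$. In a monoid $M$: $x\mid_M y$ iff $y\in MxM$; $x,y$ are associated if each divides the other; proper divisor means divides but not associated. A unit-divisor divides $1_M$; otherwise it is a non-unit-divisor. An irreducible is a non-unit-divisor $a$ with $a\neq xy$ for all non-unit-divisors $x,y$ properly dividing $a$. A factorization of $x$ is a finite word over the irreducibles with product $x$. For words $\mathfrak a,\mathfrak b$, $\mathfrak a\sqsubseteq\mathfrak b$ means $\mathfrak a$ is, up to associatedness of letters, a subword (subsequence) of some permutation of $\mathfrak b$; equivalence means $\sqsubseteq$ both ways. A factorization $\mathfrak a$ of $x$ is minimal if no factorization $\mathfrak b$ of $x$ satisfies $\mathfrak b\sqsubseteq\mathfrak a\not\sqsubseteq\mathfrak b$. $M$ is UmF if every non-unit-divisor has a factorization and any two minimal factorizations of an element are equivalent. *)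

(* Defs.v *)
From Stdlib Require Import List Permutation.
Import ListNotations.
Set Implicit Arguments.

Record monoid := Monoid {
  mcarrier :> Type;
  mop : mcarrier -> mcarrier -> mcarrier;
  mone : mcarrier;
  mopA : forall x y z, mop x (mop y z) = mop (mop x y) z;
  mop1l : forall x, mop mone x = x;
  mop1r : forall x, mop x mone = x }.

Definition breakable (H : monoid) : Prop :=
  forall x y : H, mop H x y = x \/ mop H x y = y.

Definition fin_set (T : Type) (X : T -> Prop) : Prop :=
  exists l : list T, forall x, X x -> In x l.

(** non-empty finite subsets of H containing 1_H (non-emptiness follows from 1_H ∈ X) *)
Definition Pfin1 (H : monoid) : Type :=
  { X : H -> Prop | fin_set X /\ X (mone H) }.

Definition setmul (H : monoid) (X Y : H -> Prop) : H -> Prop :=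
  fun z => exists x y, X x /\ Y y /\ z = mop H x y.

Lemma setmul_fin (H : monoid) (X Y : H -> Prop) :
  fin_set X -> fin_set Y -> fin_set (setmul H X Y).
Proof.
  intros [lx Hx] [ly Hy].
  exists (flat_map (fun x => map (mop H x) ly) lx).
  intros z [x [y [Xx [Yy ->]]]].
  apply in_flat_map. exists x. split; [auto|]. apply in_map. auto.
Qed.

Lemma setmul_one (H : monoid) (X Y : H -> Prop) :
  X (mone H) -> Y (mone H) -> setmul H X Y (mone H).
Proof.
  intros HX HY. exists (mone H), (mone H). repeat split; auto.
  now rewrite mop1l.
Qed.

Definition Pmul (H : monoid) (X Y : Pfin1 H) : Pfin1 H :=
  exist _ (setmul H (proj1_sig X) (proj1_sig Y))
    (conj (setmul_fin H (proj1 (proj2_sig X)) (proj1 (proj2_sig Y)))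
          (setmul_one H _ _ (proj2 (proj2_sig X)) (proj2 (proj2_sig Y)))).

Lemma Pone_prop (H : monoid) :
  fin_set (fun z : H => z = mone H) /\ (fun z : H => z = mone H) (mone H).
Proof. split; [exists [mone H]; intros x ->; now left | reflexivity]. Qed.

Definition Pone (H : monoid) : Pfin1 H :=
  exist _ (fun z => z = mone H) (Pone_prop H).

Section Factorization.
Variables (M : Type) (op : M -> M -> M) (e : M).

Definition mdivides (x y : M) : Prop := exists u v, y = op (op u x) v.
Definition massociated (x y : M) : Prop := mdivides x y /\ mdivides y x.
Definition proper_divisor (x y : M) : Prop := mdivides x y /\ ~ massociated x y.
Definition unit_divisor (x : M) : Prop := mdivides x e.

Definition irreducible (a : M) : Prop :=
  ~ unit_divisor a /\
  forall x y, ~ unit_divisor x -> ~ unit_divisor y ->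
    proper_divisor x a -> proper_divisor y a -> a <> op x y.

Definition word_prod (w : list M) : M := fold_right op e w.

Definition factorization (w : list M) (x : M) : Prop :=
  Forall irreducible w /\ word_prod w = x.

Inductive subword {T : Type} : list T -> list T -> Prop :=
  | subword_nil : subword [] []
  | subword_skip : forall x l l', subword l l' -> subword l (x :: l')
  | subword_keep : forall x l l', subword l l' -> subword (x :: l) (x :: l').

Definition wsub (a b : list M) : Prop :=
  exists b' c, Permutation b b' /\ subword c b' /\ Forall2 massociated a c.

Definition wequiv (a b : list M) : Prop := wsub a b /\ wsub b a.

Definition minimal_factorization (a : list M) (x : M) : Prop :=
  factorization a x /\
  ~ (exists b, factorization b x /\ wsub b a /\ ~ wsub a b).

Definition UmF : Prop :=
  (forall x, ~ unit_divisor x -> exists w, factorization w x) /\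
  (forall x a b, minimal_factorization a x -> minimal_factorization b x -> wequiv a b).

End Factorization.

(* Main.v *)
Require Import Defs.
From Stdlib Require Import List Permutation Classical FunctionalExtensionality PropExtensionality ProofIrrelevance Lia.
Import ListNotations.
Set Implicit Arguments.

Notation ext X := (proj1_sig X).

Lemma Pext (H : monoid) (X Y : Pfin1 H) :
  (forall z, ext X z <-> ext Y z) -> X = Y.
Proof.
  destruct X as [X pX], Y as [Y pY]; simpl; intro E.
  assert (X = Y) by (apply functional_extensionality; intro z; apply propositional_extensionality; auto).
  subst. f_equal. apply proof_irrelevance.
Qed.

Lemma ext_mul (H : monoid) (hb : breakable H) (X Y : Pfin1 H) z :
  ext (Pmul X Y) z <-> ext X z \/ ext Y z.
Proof.
  simpl. split.
  - intros [x [y [Xx [Yy ->]]]]. destruct (hb x y) as [E|E]; rewrite E; auto.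
  - intros [Xz|Yz].
    + exists z, (mone H). repeat split; auto. exact (proj2 (proj2_sig Y)). now rewrite mop1r.
    + exists (mone H), z. repeat split; auto. exact (proj2 (proj2_sig X)). now rewrite mop1l.
Qed.

Lemma one_in (H : monoid) (X : Pfin1 H) : ext X (mone H).
Proof. exact (proj2 (proj2_sig X)). Qed.

Lemma divides_sub (H : monoid) (hb : breakable H) (X Y : Pfin1 H) :
  mdivides (@Pmul H) X Y -> forall z, ext X z -> ext Y z.
Proof.
  intros [u [v ->]] z Hz. apply ext_mul; auto. left. apply ext_mul; auto.
Qed.

Lemma sub_divides (H : monoid) (hb : breakable H) (X Y : Pfin1 H) :
  (forall z, ext X z -> ext Y z) -> mdivides (@Pmul H) X Y.
Proof.
  intro S. exists (Pone H), Y. apply Pext. intro z.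
  rewrite !ext_mul by auto. simpl. split; [auto|intros [[E|E]|E]; subst; auto; apply one_in].
Qed.

Lemma assoc_eq (H : monoid) (hb : breakable H) (X Y : Pfin1 H) :
  massociated (@Pmul H) X Y -> X = Y.
Proof.
  intros [d1 d2]. apply Pext. intro z; split; apply divides_sub; auto.
Qed.

Lemma assoc_refl (H : monoid) (hb : breakable H) (X : Pfin1 H) :
  massociated (@Pmul H) X X.
Proof. split; apply sub_divides; auto. Qed.

Lemma unit_char (H : monoid) (hb : breakable H) (X : Pfin1 H) :
  unit_divisor (@Pmul H) (Pone H) X <-> forall z, ext X z -> z = mone H.
Proof.
  split.
  - intros D z Hz. exact (divides_sub hb D z Hz).
  - intro S. apply sub_divides; auto.
Qed.

Lemma nonunit (H : monoid) (hb : breakable H) (X : Pfin1 H) :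
  ~ unit_divisor (@Pmul H) (Pone H) X <-> exists a, ext X a /\ a <> mone H.
Proof.
  rewrite unit_char by auto. split.
  - intro N. apply NNPP. intro N2. apply N. intros z Hz.
    apply NNPP. intro. apply N2. eauto.
  - intros [a [Ha Na]] S. auto.
Qed.

Definition sing2 (H : monoid) (p : H) : Pfin1 H.
Proof.
  exists (fun z => z = mone H \/ z = p). split.
  - exists [mone H; p]. intros x [->| ->]; simpl; auto.
  - auto.
Defined.

Definition remv (H : monoid) (X : Pfin1 H) (p : H) (hp : p <> mone H) : Pfin1 H.
Proof.
  exists (fun z => ext X z /\ z <> p). split.
  - destruct (proj1 (proj2_sig X)) as [l Hl]. exists l. intros x [Hx _]. auto.
  - split. apply one_in. auto.
Defined.

Lemma irr_form (H : monoid) (hb : breakable H) (A : Pfin1 H) :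
  irreducible (@Pmul H) (Pone H) A ->
  exists a, a <> mone H /\ forall z, ext A z <-> z = mone H \/ z = a.
Proof.
  intros [Hnu Hirr]. apply nonunit in Hnu; auto.
  destruct Hnu as [a [Ha Na]]. exists a. split; auto. intro z. split.
  - intro Hz. destruct (classic (z = mone H)) as [E|Nz]; auto.
    destruct (classic (z = a)) as [E|Nza]; auto. exfalso.
    apply (Hirr (remv A Nz) (sing2 H z)).
    + apply nonunit; auto. exists a. simpl. auto.
    + apply nonunit; auto. exists z. simpl. auto.
    + split. apply sub_divides; auto. simpl. tauto.
      intros [_ D]. apply (divides_sub hb D z Hz). reflexivity.
    + split. apply sub_divides; auto. simpl. intros w [->| ->]; auto. apply one_in.
      intros [_ D]. destruct (divides_sub hb D a Ha); auto.
    + apply Pext. intro w. rewrite ext_mul by auto. simpl.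
      destruct (classic (w = z)); intuition; subst; auto; apply one_in.
  - intros [->| ->]; auto. apply one_in.
Qed.

Lemma sing2_irr (H : monoid) (hb : breakable H) (p : H) :
  p <> mone H -> irreducible (@Pmul H) (Pone H) (sing2 H p).
Proof.
  intro Np. split.
  - apply nonunit; auto. exists p. simpl. auto.
  - intros x y nx ny [dx ax] _ _. apply ax.
    apply nonunit in nx; auto. destruct nx as [b [Hb Nb]].
    pose proof (divides_sub hb dx b Hb) as E. simpl in E.
    destruct E as [E|E]; [contradiction|subst b].
    split; auto. apply sub_divides; auto. simpl. intros w [->| ->]; auto. apply one_in.
Qed.

Lemma ext_word (H : monoid) (hb : breakable H) (w : list (Pfin1 H)) z :
  ext (word_prod (@Pmul H) (Pone H) w) z <-> z = mone H \/ exists A, In A w /\ ext A z.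
Proof.
  induction w as [|B w IH].
  - simpl. split; auto. intros [E|[A [[] _]]]; auto.
  - change (word_prod (@Pmul H) (Pone H) (B :: w)) with (Pmul B (word_prod (@Pmul H) (Pone H) w)).
    rewrite (ext_mul hb). rewrite IH. simpl. split.
    + intros [Hz|[Hz|[A [I Hz]]]]; eauto.
    + intros [->|[A [[<-|I] Hz]]]; [left; apply one_in|left; exact Hz|right; right; eauto].
Qed.

Lemma subword_refl {T} (l : list T) : subword l l.
Proof. induction l; [apply subword_nil|apply subword_keep; auto]. Qed.

Lemma subword_drop {T} (l1 l2 : list T) x : subword (l1 ++ l2) (l1 ++ x :: l2).
Proof. induction l1; simpl; [apply subword_skip, subword_refl|apply subword_keep; auto]. Qed.

Lemma subword_length {T} (l l' : list T) : subword l l' -> length l <= length l'.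
Proof. induction 1; simpl; auto with arith. Qed.

Lemma wsub_length (M : Type) op (a b : list M) : wsub op a b -> length a <= length b.
Proof.
  intros [b' [c [P [S F]]]]. rewrite (Permutation_length P).
  rewrite (Forall2_length F). now apply subword_length.
Qed.

Lemma forall2_refl (H : monoid) (hb : breakable H) (l : list (Pfin1 H)) :
  Forall2 (massociated (@Pmul H)) l l.
Proof. induction l; constructor; auto. apply assoc_refl; auto. Qed.

Lemma not_nodup {T} (l : list T) :
  ~ NoDup l -> exists l1 x l2, l = l1 ++ x :: l2 /\ In x l2.
Proof.
  induction l as [|x l IH]; intro N.
  - exfalso. apply N. constructor.
  - destruct (classic (In x l)) as [I|NI].
    + exists [], x, l. auto.
    + destruct IH as [l1 [y [l2 [E I]]]].
      * intro D. apply N. constructor; auto.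
      * exists (x :: l1), y, l2. subst. auto.
Qed.

Lemma min_nodup (H : monoid) (hb : breakable H) a x :
  minimal_factorization (@Pmul H) (Pone H) a x -> NoDup a.
Proof.
  intros [[Fa Pa] Nm]. apply NNPP. intro N. apply not_nodup in N.
  destruct N as [l1 [A [l2 [E I]]]]. subst a. apply Nm.
  exists (l1 ++ l2). split; [split|split].
  - rewrite Forall_forall in *. intros B IB. apply Fa.
    apply in_app_or in IB. apply in_or_app. simpl. tauto.
  - rewrite <- Pa. apply Pext. intro z. rewrite !ext_word by auto.
    split; intros [?|[B [IB Hz]]]; auto; right.
    + exists B. split; auto. apply in_app_or in IB. apply in_or_app. simpl. tauto.
    + apply in_app_or in IB. destruct IB as [IB|[<-|IB]].
      * exists B. split; auto. apply in_or_app; auto.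
      * exists A. split; auto. apply in_or_app; auto.
      * exists B. split; auto. apply in_or_app; auto.
  - exists (l1 ++ A :: l2), (l1 ++ l2). split. apply Permutation_refl.
    split. apply subword_drop. apply forall2_refl; auto.
  - intro W. apply wsub_length in W. rewrite !length_app in W. simpl in W.
    lia.
Qed.

Lemma fact_incl (H : monoid) (hb : breakable H) a b x A :
  factorization (@Pmul H) (Pone H) a x -> factorization (@Pmul H) (Pone H) b x ->
  In A a -> In A b.
Proof.
  intros [Fa Pa] [Fb Pb] IA. rewrite Forall_forall in Fa, Fb.
  destruct (irr_form hb (Fa A IA)) as [p [Np Ep]].
  assert (Hp : ext (word_prod (Pmul (H:=H)) (Pone H) b) p).
  { rewrite Pb, <- Pa. apply ext_word; auto. right. exists A. split; auto. apply Ep; auto. }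
  apply ext_word in Hp; auto. destruct Hp as [?|[B [IB HB]]]; [contradiction|].
  destruct (irr_form hb (Fb B IB)) as [q [Nq Eq]].
  apply Eq in HB. destruct HB as [?|HB]; [contradiction|subst q].
  replace A with B; auto. apply Pext. intro z. rewrite Eq, Ep. tauto.
Qed.

Lemma build (H : monoid) (hb : breakable H) (X : Pfin1 H) (l : list H) :
  exists w, Forall (irreducible (@Pmul H) (Pone H)) w /\
    forall z, ext (word_prod (@Pmul H) (Pone H) w) z <-> z = mone H \/ (In z l /\ ext X z).
Proof.
  induction l as [|p l [w [Fw Ew]]].
  - exists []. split; auto. intro z. simpl. tauto.
  - destruct (classic (ext X p /\ p <> mone H)) as [[Xp Np]|N].
    + exists (sing2 H p :: w). split. constructor; auto. apply sing2_irr; auto.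
      intro z. change (word_prod (@Pmul H) (Pone H) (sing2 H p :: w)) with (Pmul (sing2 H p) (word_prod (@Pmul H) (Pone H) w)).
      rewrite ext_mul, Ew by auto. simpl.
      intuition; subst; auto.
    + exists w. split; auto. intro z. rewrite Ew. simpl. split.
      * intuition.
      * intros [?|[[E|I] Hz]]; auto. subst z.
        destruct (classic (p = mone H)); auto. exfalso; auto.
Qed.

Theorem proposition4p7 (H : monoid) :
  breakable H -> UmF (@Pmul H) (Pone H).
Proof.
  intro hb. split.
  - intros X _. destruct (proj1 (proj2_sig X)) as [l Hl].
    destruct (build hb X l) as [w [Fw Ew]]. exists w. split; auto.
    apply Pext. intro z. rewrite Ew. split.
    + intros [->|[_ Hz]]; auto. apply one_in.
    + intro Hz. right. auto.
  - intros x a b ma mb.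
    pose proof (min_nodup hb ma) as Na. pose proof (min_nodup hb mb) as Nb.
    destruct ma as [fa _], mb as [fb _].
    assert (P : Permutation b a).
    { apply NoDup_Permutation; auto. intro A; split; intro I.
      eapply (fact_incl hb); [exact fb|exact fa|exact I]. eapply (fact_incl hb); [exact fa|exact fb|exact I]. }
    split.
    + exists a, a. split; auto. split. apply subword_refl. apply forall2_refl; auto.
    + exists b, b. split. symmetry; auto. split. apply subword_refl. apply forall2_refl; auto.
Qed.
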